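(* Let $F\subsetneq K$ be fields of characteristic $0$, with $F$ a proper nonempty subfield of $K$. Let $p(x)=\sum_{k=0}^{n}a_k x^k\in K[x]$ with $a_n\neq 0$, and $q(x)=\sum_{j=0}^{m}b_j x^j\in K[x]$ with $b_m\neq 0$ and $b_0,b_m\in F$. Suppose $p\circ q\in F[x]$. Then $p\in F[x]$ or $q\in F[x]$. Moreover, if $p\circ q$ is not constant, then $p\in F[x]$ and $q\in F[x]$.
   Context: $F[x]$ denotes the set of polynomials with all coefficients in $F$. *)

(* Defs.v *)
From HB Require Import structures.
From mathcomp Require Import all_boot all_order all_algebra.

(* Main.v *)
Require Import Defs.
From HB Require Import structures.
From mathcomp Require Import all_boot all_order all_algebra.
From mathcomp Require Import ring zify.
Import GRing.Theory.
Local Open Scope ring_scope.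

Lemma size_mulrn_leq (R : nzSemiRingType) (x : {poly R}) k : (size (x *+ k)%R <= size x)%N.
Proof. by apply/leq_sizeP => i hi; rewrite coefMn nth_default // mul0rn. Qed.

Lemma expand_size (R : comNzRingType) (s t : {poly R}) (m j k : nat) :
  (size s <= m.+1)%N -> (size t <= j.+1)%N -> (j < m)%N ->
  (size ((s + t) ^+ k.+1 - s ^+ k.+1 - (s ^+ k * t) *+ k.+1)%R <= k * m + j)%N.
Proof.
move=> hs ht hjm; elim: k => [|k IH].
  by rewrite !expr1 expr0 mul1r mulr1n addrAC addrK subrr size_poly0.
set e := (s + t) ^+ k.+1 - s ^+ k.+1 - (s ^+ k * t) *+ k.+1 in IH.
have -> : (s + t) ^+ k.+2 - s ^+ k.+2 - (s ^+ k.+1 * t) *+ k.+2 =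
          (s + t) * e + (s ^+ k * t ^+ 2) *+ k.+1.
  rewrite /e !exprS expr0.
  set S := s ^+ k. set T := (s + t) ^+ k.
  ring.
have hsm : ((size s).-1 <= m)%N by move: hs; case: (size s) => [|a] /=; lia.
have htj : ((size t).-1 <= j)%N by move: ht; case: (size t) => [|a] /=; lia.
apply: leq_trans (size_polyD _ _) _; rewrite geq_max; apply/andP; split.
  apply: leq_trans (size_polyMleq _ _) _.
  have h1 : (size (s + t)%R <= m.+1)%N.
    apply: leq_trans (size_polyD _ _) _; rewrite geq_max hs /=.
    by rewrite (leq_trans ht) // ltnS ltnW.
  move: h1 IH; rewrite mulSn; generalize (size (s + t)%R) (size e) (k * m) => a b c.
  lia.
apply: leq_trans (size_mulrn_leq _ _ _) _.
apply: leq_trans (size_polyMleq _ _) _.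
have h1 := size_poly_exp_leq s k.
have h2 := size_poly_exp_leq t 2.
have h5 : ((size s).-1 * k <= m * k)%N by apply: leq_mul.
have h6 : ((size t).-1 * 2 <= j * 2)%N by apply: leq_mul.
move: h1 h2 h5 h6 hjm; rewrite mulSn (mulnC k m).
generalize (size (s ^+ k)%R) (size (t ^+ 2)%R) ((size s).-1 * k)%N ((size t).-1 * 2)%N (m * k)%N => a b c d f.
lia.
Qed.
Lemma qF (K : fieldType) (F : divringClosed K)
  (charK0 : [pchar K] =i pred0) (p q : {poly K})
  (sp1 : (1 < size p)%N) (sq1 : (1 < size q)%N)
  (q0F : q`_0 \in F) (qlcF : lead_coef q \in F)
  (pqF : (p \Po q) \is a polyOver F) : q \is a polyOver F.
Proof.
have F0 : (0 : K) \in F := rpred0 _.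
case: (boolP [exists i : 'I_(size q), q`_i \notin F]); last first.
  move/existsPn=> H; apply/polyOverP => i; case: (ltnP i (size q)) => hi.
    by have := H (Ordinal hi); rewrite negbK.
  by rewrite nth_default.
move=> hex; exfalso.
have exP : exists i, q`_i \notin F by case/existsP: hex => i hi; exists i.
have ubP : forall i, q`_i \notin F -> (i <= (size q).-1)%N.
  move=> i hi; case: (ltnP i (size q)) => h; first by move: h sq1; clear; lia.
  by move: hi; rewrite nth_default // F0.
case: (ex_maxnP exP ubP) => j hj maxj.
set m := (size q).-1.
have hjm : (j <= m)%N by exact: ubP.
have j0 : j != 0%N by apply: contraNneq hj => ->.
have jm : j != m by apply: contraNneq hj => ->; rewrite -lead_coefE.
have jm' : (j < m)%N by rewrite ltn_neqAle jm.
have j1 : (0 < j)%N by rewrite lt0n.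
have szq : size q = m.+1 by rewrite /m; move: sq1; clear; case: (size q).
set t := \poly_(i < j.+1) q`_i.
set s := q - t.
have qj0 : q`_j != 0 by apply: contraNneq hj => ->.
have szt : size t = j.+1 by rewrite /t size_poly_eq.
have lct : lead_coef t = q`_j by rewrite lead_coefE szt coef_poly ltnSn.
have st : s + t = q by rewrite /s subrK.
have szs : size s = size q by rewrite /s size_polyDl // size_polyN szt szq ltnS.
have lcs : lead_coef s = lead_coef q by rewrite /s lead_coefDl // size_polyN szt szq ltnS.
have sF : s \is a polyOver F.
  apply/polyOverP => i; rewrite coefB coef_poly; case: ltnP => hi.
    by rewrite subrr.
  rewrite subr0; case: (boolP (q`_i \in F)) => // /maxj; rewrite leqNgt hi.
  by [].
have s0 : s != 0 by rewrite -size_poly_gt0 szs szq.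
have t0 : t != 0 by rewrite -size_poly_gt0 szt.
have b0 : lead_coef q != 0 by rewrite lead_coef_eq0 -size_poly_gt0 szq.
set n' := (size p).-2.
have szp : size p = n'.+2 by rewrite /n'; move: sp1; clear; case: (size p) => [|[|a]].
set D := (n' * m + j)%N.
have a0 : lead_coef p != 0 by rewrite lead_coef_eq0 -size_poly_gt0 szp.
have hpD : (p \Po q)`_D = lead_coef p * ((s ^+ n'.+1)`_D + (lead_coef q ^+ n' * q`_j) *+ n'.+1).
  rewrite comp_polyE szp big_ord_recr /= coefD coef_sum big1; last first.
    move=> [i hi] _ /=; rewrite coefZ [(q ^+ i)`_D]nth_default ?mulr0 //.
    apply: leq_trans (size_poly_exp_leq _ _) _.
    rewrite szq /= /D -/m.
    have : (m * i <= m * n')%N by apply: leq_mul.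
    move: j1; rewrite mulnC; clear; lia.
  rewrite add0r coefZ lead_coefE szp /=; congr (_ * _).
  have hs : (size s <= m.+1)%N by rewrite szs szq.
  have ht : (size t <= j.+1)%N by rewrite szt.
  have E := @expand_size _ s t m j n' hs ht jm'.
  rewrite -/D in E.
  set e := (s + t) ^+ n'.+1 - s ^+ n'.+1 - (s ^+ n' * t) *+ n'.+1 in E.
  have -> : q ^+ n'.+1 = e + s ^+ n'.+1 + (s ^+ n' * t) *+ n'.+1.
    by rewrite /e -st; ring.
  clearbody e; rewrite !coefD (nth_default _ E) add0r coefMn; congr (_ + _ *+ _).
  have sn0 : s ^+ n' != 0 by rewrite expf_neq0.
  have szM : size (s ^+ n' * t) = D.+1.
    rewrite size_mul // szt (polySpred sn0) size_exp szs szq /D /=.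
    by rewrite addnS mulnC.
  have -> : D = (size (s ^+ n' * t)).-1 by rewrite szM.
  by rewrite -lead_coefE lead_coefM lead_coef_exp lcs lct.
have lpqF : lead_coef (p \Po q) \in F by rewrite lead_coefE; exact: (polyOverP pqF).
have aF : lead_coef p \in F.
  have -> : lead_coef p = lead_coef (p \Po q) / lead_coef q ^+ (size p).-1.
    by rewrite lead_coef_comp // mulfK // expf_neq0.
  by rewrite rpred_div // rpredX.
have SF : (s ^+ n'.+1)`_D \in F by apply: (polyOverP (rpredX _ sF)).
have pqDF : (p \Po q)`_D \in F by apply: (polyOverP pqF).
have N0 : (n'.+1)%:R != 0 :> K by rewrite ((pcharf0P K).1 charK0).
have hc : q`_j = ((p \Po q)`_D / lead_coef p - (s ^+ n'.+1)`_D) / (lead_coef q ^+ n' * (n'.+1)%:R).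
  rewrite hpD; field.
  by rewrite addrC natr1 N0 expf_neq0.
move: hj; rewrite hc; apply/negP/negPn.
by rewrite rpred_div ?rpredB ?rpred_div ?rpredM ?rpredX ?rpred_nat.
Qed.

Lemma pF (K : fieldType) (F : divringClosed K) (q : {poly K}) :
  q \is a polyOver F -> (1 < size q)%N ->
  forall p : {poly K}, p \Po q \is a polyOver F -> p \is a polyOver F.
Proof.
move=> qF sq p; move: {2}(size p) (leqnn (size p)) => N; elim: N p => [|N IH] p sp pqF.
  by move: sp; rewrite leqn0 size_poly_eq0 => /eqP ->; rewrite rpred0.
case: (ltnP (size p) N.+1) => hs; first by apply: IH.
have szp : size p = N.+1 by apply/eqP; rewrite eqn_leq sp hs.
have b0 : lead_coef q != 0 by rewrite lead_coef_eq0 -size_poly_gt0 ltnW.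
have lpqF : lead_coef (p \Po q) \in F by rewrite lead_coefE; exact: (polyOverP pqF).
have aF : lead_coef p \in F.
  have -> : lead_coef p = lead_coef (p \Po q) / lead_coef q ^+ (size p).-1.
    by rewrite lead_coef_comp // mulfK // expf_neq0.
  rewrite rpred_div // rpredX //.
  by rewrite lead_coefE; exact: (polyOverP qF).
set p1 := p - lead_coef p *: 'X^N.
have sp1 : (size p1 <= N)%N.
  apply/leq_sizeP => i hi; rewrite coefB coefZ coefXn.
  case: (eqVneq i N) => [->|ne].
    by rewrite mulr1 lead_coefE szp subrr.
  rewrite mulr0 subr0 nth_default // szp.
  by move: hi ne; clear; lia.
have p1F : p1 \Po q \is a polyOver F.
  rewrite /p1 comp_polyB comp_polyZ comp_Xn_poly rpredB // polyOverZ //.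
  exact: rpredX.
have := IH p1 sp1 p1F => h.
rewrite -(subrK (lead_coef p *: 'X^N) p) -/p1 rpredD // polyOverZ //.
by apply: rpredX; apply: polyOverX.
Qed.

Theorem theorem13 (K : fieldType) (F : divringClosed K)
  (charK0 : [pchar K] =i pred0)
  (Fproper : exists x : K, x \notin F)
  (p q : {poly K})
  (p_nz : p != 0) (q_nz : q != 0)
  (q0F : q`_0 \in F) (qlcF : lead_coef q \in F)
  (pqF : (p \Po q) \is a polyOver F) :
  (p \is a polyOver F \/ q \is a polyOver F) /\
  ((1 < size (p \Po q))%N -> p \is a polyOver F /\ q \is a polyOver F).
Proof.
have part2 : (1 < size (p \Po q))%N -> p \is a polyOver F /\ q \is a polyOver F.
  move=> h.
  have le := size_comp_poly_leq p q.
  have sp1 : (1 < size p)%N.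
    rewrite ltnNge; apply/negP => hp.
    move: le h; have -> : (size p).-1 = 0%N by move: hp; clear; lia.
    by rewrite mul0n; clear; lia.
  have sq1 : (1 < size q)%N.
    rewrite ltnNge; apply/negP => hq.
    move: le h; have -> : (size q).-1 = 0%N by move: hq; clear; lia.
    by rewrite muln0; clear; lia.
  have qF' := @qF K F charK0 p q sp1 sq1 q0F qlcF pqF.
  by split=> //; exact: (@pF K F q qF' sq1 p pqF).
split=> //.
case: (ltnP 1 (size (p \Po q))) => h; first by left; case: (part2 h).
case: (ltnP 1 (size q)) => hq; last first.
  by right; rewrite [q]size1_polyC // polyOverC.
case: (ltnP 1 (size p)) => hp; last first.
  left; move: pqF; rewrite [p]size1_polyC // comp_polyC.
  by rewrite polyOverC.
have e := size_comp_poly p q.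
have : (0 < (size p).-1 * (size q).-1)%N.
  by rewrite muln_gt0 -!subn1 !subn_gt0 hp hq.
rewrite -e; move: h; case: (size (p \Po q)) => [|[|x]] //.
Qed.
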